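(* Let \(\mathcal{I}\) be an instance of 3-SAT and let \(G(\mathcal{I})\) and \(T(\mathcal{I})\) be the graph and spanning tree constructed below. If \(\mathcal{I}\) admits a satisfying assignment, then \(T(\mathcal{I})\) is the \(\mathcal{F}\)-tree of some LBFS ordering of \(G(\mathcal{I})\).
   Context: Let \(\mathcal{I}\) have variables \(x_1,\dots,x_k\) and clauses \(C_1,\dots,C_l\), each a disjunction of three literals. \(G(\mathcal{I})\) has vertices: literal vertices \(X=\{x_1,\dots,x_k,\overline{x_1},\dots,\overline{x_k}\}\); for each clause \(C_i\) three vertices \(a_i,c_i,t_i\); and four vertices \(r,p,q,u\). Edges: any two vertices of \(X\) are adjacent except the pairs \(x_j\overline{x_j}\); each \(\{a_i,c_i,t_i\}\) is a triangle; \(c_i\) is adjacent to the literal vertices of the literals occurring in \(C_i\); \(r\) is adjacent to every vertex except \(u\) and the \(t_i\); \(u\) is adjacent to every vertex except \(r\) and the \(t_i\); \(p\) is adjacent to every vertex of \(X\) and to \(q\); \(q\) is adjacent to every vertex of \(X\) and to every \(a_i\); there are no other edges. \(T(\mathcal{I})\) is the spanning tree consisting of all edges of \(G(\mathcal{I})\) incident to \(r\), the edge \(up\), and the edges \(c_it_i\) for \(i=1,\dots,l\). An LBFS ordering (with \(n\) the number of vertices) is produced by starting with label \((n)\) on a start vertex, empty labels elsewhere, and for \(j=1,\dots,n\) picking an unnumbered vertex of lexicographically largest label as \(v_j\) and appending \(n-j\) to the labels of its unnumbered neighbors (ties arbitrary). The \(\mathcal{F}\)-tree of an ordering \((v_1,\dots,v_n)\)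 has, for each \(v\ne v_1\), an edge from \(v\) to its leftmost neighbor in the ordering. *)

(* Defs.v *)
From HB Require Import structures.
From mathcomp Require Import all_boot.
Set Implicit Arguments. Unset Strict Implicit. Unset Printing Implicit Defensive.

Section Generic.
Variable V : finType.
Variable adj : rel V.

Fixpoint lex_le (s t : seq nat) : bool :=
  match s, t with
  | [::], _ => true
  | _ :: _, [::] => false
  | x :: s', y :: t' => (x < y) || ((x == y) && lex_le s' t')
  end.

(* label of v just before step j+1 (0-indexed step j, i.e. when the vertex
   at position j of s is chosen), for LBFS started at x0:
   initial label (n) on x0, then for each already numbered vertex v_{i+1}
   (1-indexed position i+1 <= j) adjacent to v, the number n-(i+1). *)
Definition lbfs_label (x0 : V) (s : seq V) (j : nat) (v : V) : seq nat :=
  (if v == x0 then [:: #|V|] else [::]) ++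
  [seq #|V| - i.+1 | i <- iota 0 j & adj (nth x0 s i) v].

Definition is_LBFS (s : seq V) : Prop :=
  perm_eq s (enum V) /\
  exists x0 : V, forall j, j < size s ->
    forall v, v \notin take j s ->
      lex_le (lbfs_label x0 s j v) (lbfs_label x0 s j (nth x0 s j)).

Definition leftmost_nb (s : seq V) (v y : V) : bool :=
  adj v y && [forall z, adj v z ==> (index y s <= index z s)].

Definition ftree_edge (s : seq V) (x y : V) : bool :=
  ((0 < index x s) && leftmost_nb s x y) || ((0 < index y s) && leftmost_nb s y x).

Definition is_Ftree (s : seq V) (t : rel V) : Prop :=
  forall x y, t x y = ftree_edge s x y.
End Generic.

(* An instance: k variables, l clauses; clause i has three literals
   cl i 0, cl i 1, cl i 2, a literal being (j, b) with b = true for x_j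
   and b = false for the negation of x_j. *)
Definition lit (k : nat) := ('I_k * bool)%type.

Definition satisfiable (k l : nat) (cl : 'I_l -> 'I_3 -> lit k) : Prop :=
  exists a : 'I_k -> bool, forall i : 'I_l, exists m : 'I_3, a (cl i m).1 = (cl i m).2.

Inductive vtx (k l : nat) :=
| VLit of 'I_k & bool
| VA of 'I_l | VC of 'I_l | VT of 'I_l
| VR | VP | VQ | VU.
Arguments VLit {k l}. Arguments VA {k l}. Arguments VC {k l}. Arguments VT {k l}.
Arguments VR {k l}. Arguments VP {k l}. Arguments VQ {k l}. Arguments VU {k l}.

Section Vtx.
Variables k l : nat.
Definition vtx_enc (x : vtx k l) : (('I_k * bool) + ('I_l * 'I_3)) + 'I_4 :=
  match x with
  | VLit j b => inl (inl (j, b))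
  | VA i => inl (inr (i, inord 0))
  | VC i => inl (inr (i, inord 1))
  | VT i => inl (inr (i, inord 2))
  | VR => inr (inord 0) | VP => inr (inord 1) | VQ => inr (inord 2) | VU => inr (inord 3)
  end.
Definition vtx_dec (y : (('I_k * bool) + ('I_l * 'I_3)) + 'I_4) : vtx k l :=
  match y with
  | inl (inl (j, b)) => VLit j b
  | inl (inr (i, m)) => if val m == 0 then VA i else if val m == 1 then VC i else VT i
  | inr m => if val m == 0 then VR else if val m == 1 then VP
             else if val m == 2 then VQ else VU
  end.
Lemma vtx_encK : cancel vtx_enc vtx_dec.
Proof. by case=> //= *; rewrite inordK. Qed.
HB.instance Definition _ := Finite.copy (vtx k l) (can_type vtx_encK).
End Vtx.

Section Construction.
Variables (k l : nat) (cl : 'I_l -> 'I_3 -> lit k).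

Definition in_clause (i : 'I_l) (j : 'I_k) (b : bool) : bool :=
  [exists m : 'I_3, cl i m == (j, b)].

(* one orientation of each edge of G(I) *)
Definition gedge0 (x y : vtx k l) : bool :=
  match x, y with
  | VLit j _, VLit j' _ => j != j'
  | VA i, VC i' => i == i'
  | VA i, VT i' => i == i'
  | VC i, VT i' => i == i'
  | VC i, VLit j b => in_clause i j b
  | VR, VU | VR, VT _ | VR, VR => false
  | VR, _ => true
  | VU, VR | VU, VT _ | VU, VU => false
  | VU, _ => true
  | VP, VLit _ _ => true
  | VP, VQ => true
  | VQ, VLit _ _ => true
  | VQ, VA _ => true
  | _, _ => false
  end.

Definition Gadj (x y : vtx k l) : bool := gedge0 x y || gedge0 y x.

Definition Tedge (x y : vtx k l) : bool :=
  (Gadj x y && ((x == VR) || (y == VR)))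
  || ((x == VU) && (y == VP)) || ((x == VP) && (y == VU))
  || [exists i : 'I_l, ((x == VC i) && (y == VT i)) || ((x == VT i) && (y == VC i))].
End Construction.

(* Main.v *)
From HB Require Import structures.
Require Import Defs.
From mathcomp Require Import all_boot zify.
Set Implicit Arguments. Unset Strict Implicit. Unset Printing Implicit Defensive.

Lemma lex_le_refl : reflexive lex_le.
Proof. by elim=> //= x s IH; rewrite eqxx IH orbT. Qed.

Lemma lex_le_total : total lex_le.
Proof.
elim=> [|x s IH] [|y t] //=.
case: (ltngtP x y) => //= ->; by rewrite eqxx /= IH.
Qed.

Lemma lex_le_trans : transitive lex_le.
Proof.
move=> t s; elim: s t => [|x s IH] [|y t] [|z u] //=.
case/orP=> [Hyx|/andP[/eqP<- Hts]]; case/orP=> [Hxz|/andP[/eqP<- Hsu]].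
- by rewrite (ltn_trans Hyx Hxz).
- by rewrite Hyx.
- by rewrite Hxz.
- by rewrite eqxx (IH _ _ Hts Hsu) orbT.
Qed.

Lemma lex_filter N (a b : pred nat) m len : m + len <= N ->
  (forall i, m <= i < m + len -> a i -> ~~ b i ->
     exists i', [&& m <= i', i' < i, b i' & ~~ a i']) ->
  lex_le [seq N - i.+1 | i <- iota m len & a i] [seq N - i.+1 | i <- iota m len & b i].
Proof.
elim: len m => [|len IH] m Hle H /=; first by [].
have IH' : a m = b m -> lex_le [seq N - i.+1 | i <- iota m.+1 len & a i]
                  [seq N - i.+1 | i <- iota m.+1 len & b i].
  move=> Eab; apply: IH; first lia.
  move=> i Hi ai nbi; have [|i' /and4P[H1 H2 H3 H4]] := H i _ ai nbi; first lia.
  exists i'; rewrite H2 H3 H4 andbT /=.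
  case: (ltngtP m i') H1 => // Em _; move: H3 H4; rewrite -Em Eab => ->.
  by [].
case Ea: (a m); case Eb: (b m).
- by rewrite /= ltnn eqxx IH' ?Ea.
- by have [|i' /and4P[H1 H2 _ _]] := H m _ Ea (negbT Eb); [lia | lia].
- rewrite /=.
  case E: [seq N - i.+1 | i <- iota m.+1 len & a i] => [|y ys] //=.
  have : y \in [seq N - i.+1 | i <- iota m.+1 len & a i] by rewrite E mem_head.
  case/mapP=> i; rewrite mem_filter mem_iota => /andP[_ Hi] ->.
  apply/orP; left; lia.
- by apply: IH'; rewrite Ea Eb.
Qed.

Lemma card_vtx k l : #|{: vtx k l}| = 2 * k + 3 * l + 4.
Proof.
have decK : cancel (@vtx_dec k l) (@vtx_enc k l).
  case=> [[[j b]|[i m]]|m] //=.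
  - case: m => [[|[|[|m]]] Hm] //=; congr (inl (inr (_, _))); apply: val_inj; rewrite /= inordK //.
  - case: m => [[|[|[|[|m]]]] Hm] //=; congr inr; apply: val_inj; rewrite /= inordK //.
rewrite (bij_eq_card (f := @vtx_enc k l)); last by exists (@vtx_dec k l); [exact: vtx_encK|].
by rewrite !card_sum !card_prod !card_ord card_bool; lia.
Qed.
Section Main.
Variables (k l : nat) (cl : 'I_l -> 'I_3 -> lit k) (a : 'I_k -> bool).
Hypothesis sat : forall i : 'I_l, exists m : 'I_3, a (cl i m).1 = (cl i m).2.

Local Notation V := (vtx k l).
Local Notation adj := (Gadj cl).

Definition Tl (j : 'I_k) : V := VLit j (a j).
Definition Fl (j : 'I_k) : V := VLit (rev_ord j) (~~ a (rev_ord j)).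
Definition P : seq V := [:: VR; VP] ++ map Tl (enum 'I_k) ++ [:: VQ] ++ map Fl (enum 'I_k).
Definition NN := #|{: V}|.
Definition keyc (i : 'I_l) := [seq NN - p.+1 | p <- iota 0 (2 * k + 3) & adj (nth VR P p) (VC i)].
Definition Rc (i i' : 'I_l) := lex_le (keyc i') (keyc i).
Definition sig := sort Rc (enum 'I_l).
Definition s : seq V := P ++ map VC sig ++ map VA sig ++ [:: VU] ++ map VT sig.
Definition rk (i : 'I_l) := index i sig.
Definition pos (x : V) : nat :=
  match x with
  | VR => 0 | VP => 1
  | VLit j b => if b == a j then 2 + j else 2 * k + 2 - j
  | VQ => k + 2
  | VC i => 2 * k + 3 + rk i
  | VA i => 2 * k + 3 + l + rk i
  | VU => 2 * k + 3 + 2 * l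
  | VT i => 2 * k + 4 + 2 * l + rk i
  end.

Lemma perm_sig : perm_eq sig (enum 'I_l).
Proof. by rewrite /sig perm_sort. Qed.
Lemma mem_sig i : i \in sig.
Proof. by rewrite (perm_mem perm_sig) mem_enum. Qed.
Lemma size_sig : size sig = l.
Proof. by rewrite (perm_size perm_sig) size_enum_ord. Qed.
Lemma rk_lt i : rk i < l.
Proof. by rewrite /rk -[X in _ < X]size_sig index_mem mem_sig. Qed.

Lemma notin_map (A : eqType) (f : A -> V) (x : V) (q : seq A) :
  (forall y, f y <> x) -> (x \in map f q) = false.
Proof. by move=> H; apply/mapP => -[y _ E]; exact: (H y (esym E)). Qed.


Definition vtx_beq (x y : V) : bool :=
  match x, y with
  | VLit j b, VLit j' b' => (j == j') && (b == b')
  | VA i, VA i' => i == i'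
  | VC i, VC i' => i == i'
  | VT i, VT i' => i == i'
  | VR, VR | VP, VP | VQ, VQ | VU, VU => true
  | _, _ => false
  end.

Lemma vtx_eqE (x y : V) : (x == y) = vtx_beq x y.
Proof.
apply/eqP/idP => [->|].
  by case: y => * /=; rewrite ?eqxx.
case: x => [j b|i|i|i| | | | ]; case: y => //=.
- by move=> j' b' /andP[/eqP-> /eqP->].
- by move=> i' /eqP->.
- by move=> i' /eqP->.
- by move=> i' /eqP->.
Qed.

Lemma idx_skip (x : V) s1 s2 : x \notin s1 -> index x (s1 ++ s2) = size s1 + index x s2.
Proof. by move=> H; rewrite index_cat (negbTE H). Qed.
Lemma idx_here (x : V) s1 s2 : x \in s1 -> index x (s1 ++ s2) = index x s1.
Proof. by move=> H; rewrite index_cat H. Qed.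

Lemma Tl_inj : injective Tl. Proof. by move=> x y []. Qed.
Lemma Fl_inj : injective Fl. Proof. move=> x y E; apply: rev_ord_inj; case: E => H _; exact: val_inj. Qed.
Lemma VC_inj : injective (@VC k l). Proof. by move=> x y []. Qed.
Lemma VA_inj : injective (@VA k l). Proof. by move=> x y []. Qed.
Lemma VT_inj : injective (@VT k l). Proof. by move=> x y []. Qed.

Ltac skp := rewrite idx_skip; last first;
  [ rewrite ?inE ?vtx_eqE /= ?notin_map //; move=> y; discriminate | ].

Lemma index_s x : index x s = pos x.
Proof.
rewrite /s /P -!catA.
case: x => [j b|i|i|i| | | | ].
- have [Eb|Nb] := eqVneq b (a j).
  + skp; subst b; rewrite idx_here; last by rewrite (mem_map Tl_inj) mem_enum.
    rewrite (index_map Tl_inj) index_enum_ord /= eqxx; lia.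
  + skp; rewrite idx_skip; last first.
      by rewrite notin_map // => y [Ey Eb]; subst; rewrite eqxx in Nb.
    skp.
    have -> : VLit j b = Fl (rev_ord j) by rewrite /Fl rev_ordK; case: (b) (a j) Nb => [] [].
    rewrite idx_here; last by rewrite (mem_map Fl_inj) mem_enum.
    rewrite (index_map Fl_inj) index_enum_ord /= size_map -?enumT size_enum_ord rev_ordK.
    case: (a j) => /=; have := ltn_ord j; lia.
- do 5 skp; rewrite idx_here; last by rewrite (mem_map VA_inj) mem_sig.
  rewrite (index_map VA_inj) !size_map -?enumT size_enum_ord size_sig /= /= /rk; lia.
- do 4 skp; rewrite idx_here; last by rewrite (mem_map VC_inj) mem_sig.
  rewrite (index_map VC_inj) !size_map -?enumT size_enum_ord /= /rk; lia.
- do 7 skp.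
  rewrite (index_map VT_inj) !size_map -?enumT size_enum_ord size_sig /= /rk; lia.
- by rewrite idx_here /= ?inE ?vtx_eqE.
- by rewrite idx_here /= ?inE ?vtx_eqE.
- do 2 skp. rewrite idx_here /= ?inE ?vtx_eqE //=.
  by rewrite !size_map -?enumT size_enum_ord /=; lia.
- do 6 skp. rewrite idx_here /= ?inE ?vtx_eqE //=.
  by rewrite !size_map -?enumT size_enum_ord size_sig /=; lia.
Qed.

Lemma size_s : size s = 2 * k + 3 * l + 4.
Proof.
rewrite /s /P !size_cat !size_map -?enumT size_enum_ord size_sig /=; lia.
Qed.

Lemma pos_lt x : pos x < 2 * k + 3 * l + 4.
Proof.
case: x => [j b|i|i|i| | | | ] /=; try (have := rk_lt i); try (have := ltn_ord j);
  try case: (b == a j); lia.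
Qed.

Lemma mem_s x : x \in s.
Proof. by rewrite -index_mem index_s size_s pos_lt. Qed.

Lemma uniq_s : uniq s.
Proof.
apply/card_uniqP/eqP; rewrite eqn_leq card_size size_s -card_vtx.
apply: subset_leq_card; apply/subsetP => x _; exact: mem_s.
Qed.

Lemma nth_pos x : nth VR s (pos x) = x.
Proof. by rewrite -index_s nth_index // mem_s. Qed.

Lemma pos_inj : injective pos.
Proof. by move=> x y E; rewrite -(nth_pos x) E nth_pos. Qed.

Lemma pos_nth i : i < size s -> pos (nth VR s i) = i.
Proof. by move=> Hi; rewrite -index_s index_uniq // uniq_s. Qed.

Lemma rk_inj : injective rk.
Proof.
move=> i i' E; by rewrite -(nth_index i (mem_sig i)) -(nth_index i (mem_sig i')) -/(rk i) -/(rk i') E.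
Qed.

Lemma adjC x y : adj x y = adj y x.
Proof. by rewrite /Gadj orbC. Qed.

Definition cond (x v : V) := forall w, pos w < pos x -> adj w v -> ~~ adj w x ->
  exists w', pos w' < pos w /\ adj w' x /\ ~~ adj w' v.

Lemma W_r x v : adj VR x -> ~~ adj VR v -> cond x v.
Proof.
move=> Hx Hv w _ Hwv _; exists VR; split => //.
case: (posnP (pos w)) => // /(@pos_inj w VR) E; by rewrite -E Hwv in Hv.
Qed.

Lemma W_p x v : adj VP x -> ~~ adj VP v -> adj VR x -> cond x v.
Proof.
move=> Hx Hv Hr w _ Hwv Hwx; exists VP; split => //.
case: (ltnP 1 (pos w)) => // Hw.
have [E|E] : w = VR \/ w = VP.
  move: Hw; case: w {Hwv Hwx} => [j b|i|i|i| | | | ] /=; try (have := ltn_ord j);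
    try case: (b == a j); try lia; auto.
- by move: Hwx; rewrite E Hr.
- by move: Hwv; rewrite E (negbTE Hv).
Qed.

Lemma W_triv x v : (forall w, pos w < pos x -> adj w x) -> cond x v.
Proof. by move=> H w Hw _; rewrite H. Qed.

Lemma ordE n (i j : 'I_n) : (i == j) = (nat_of_ord i == nat_of_ord j).
Proof. by []. Qed.
Lemma rkE (i j : 'I_l) : (i == j) = (rk i == rk j).
Proof. by rewrite (inj_eq rk_inj). Qed.

Definition is_c (x : V) := if x is VC _ then true else false.

Lemma cond_all x v : 0 < pos x <= pos v -> ~~ (is_c x && is_c v) -> cond x v.
Proof.
case: x => [m bm|i|i|i| | | | ].
- have Hm := ltn_ord m.
  case: (boolP (bm == a m)) => [/eqP->|Nb].
  + move=> _ _; apply: W_triv => w; case: w => [j b|j|j|j| | | | ] /=; rewrite /Gadj /= ?eqxx ?ordE //;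
      try (have := ltn_ord j); try (have := rk_lt j); try case: (b == a j); try lia.
  + have Eb : bm = ~~ a m by case: bm (a m) Nb => [] [].
    subst bm => /andP[_ Hp] _.
    have Hx : pos (VLit m (~~ a m)) = 2 * k + 2 - m by rewrite /=; case: (a m).
    rewrite Hx in Hp.
    case: v Hp => [j b|i|i|i| | | | ] Hp.
    * have Hj := ltn_ord j.
      have [Hjm Eb] : j <= m /\ b = ~~ a j.
        move: Hp; rewrite /=; case: (boolP (b == a j)) => [_|Nbj]; first lia.
        by split; [lia | case: b (a j) Nbj => [] []].
      subst b.
      rewrite /cond Hx => w; case: w => [j' b'|j'|j'|j'| | | | ] /=; rewrite /Gadj /= ?ordE //;
        try (have := ltn_ord j'); try (have := rk_lt j'); try lia.
      move=> Hj' Hw Hwv Hwx.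
      have Ej : nat_of_ord j' = m by lia.
      have Eb : b' = a j'.
        by move: Hw; case: (boolP (b' == a j')) => [/eqP//|_ H]; exfalso; lia.
      subst b'; rewrite eqxx in Hw.
      exists (VLit j (a j)); rewrite /= eqxx /Gadj /= ?ordE eqxx /=.
      split; first lia. split; last by rewrite eqxx. by apply/orP; left; apply/negP => /eqP E; rewrite E in Hwv; lia.
    * by apply: W_p; rewrite /Gadj.
    * by apply: W_p; rewrite /Gadj.
    * by apply: W_r; rewrite /Gadj.
    * by move: Hp => /=; lia.
    * by move: Hp => /=; lia.
    * by move: Hp => /=; lia.
    * by apply: W_r; rewrite /Gadj.
- move=> /andP[_ Hp] _; have Hi := rk_lt i.
  case: v Hp => [j b|i'|i'|i'| | | | ] /= Hp; try (have Hi' := rk_lt i');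
    try (by apply: W_r; rewrite /Gadj); try (move=> *; exfalso; lia).
  + by move: Hp; have := ltn_ord j; case: (b == a j); lia.
  + rewrite /cond => w; case: w => [j b|j|j|j| | | | ] /=; rewrite /Gadj /= ?rkE ?eqxx //=;
      try (have := rk_lt j); try (have := ltn_ord j); try (case: (b == a j)); try (move=> *; exfalso; lia);
    (move=> *; exists (VC i)); rewrite /Gadj /= ?rkE ?eqxx /=; split; [lia|split; [by []|lia]].
- move=> /andP[_ Hp] Hc; have Hi := rk_lt i.
  case: v Hp Hc => [j b|i'|i'|i'| | | | ] /= Hp Hc; try (have Hi' := rk_lt i');
    try (by apply: W_r; rewrite /Gadj); try (move=> *; exfalso; lia).
  + by move: Hp; have := ltn_ord j; case: (b == a j); lia.
  + rewrite /cond => w; case: w => [j b|j|j|j| | | | ] /=; rewrite /Gadj /= ?rkE ?eqxx //=;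
      try (have := rk_lt j); try (have := ltn_ord j); try (case: (b == a j)); try (move=> *; exfalso; lia);
      (intros; have [mm Hmm] := sat i; exists (VLit (cl i mm).1 (cl i mm).2);
      rewrite /= Hmm eqxx /Gadj /=; split; [have := ltn_ord (cl i mm).1; lia | split => //];
      by apply/existsP; exists mm; rewrite -surjective_pairing).
- move=> /andP[_ Hp] _; have Hi := rk_lt i.
  case: v Hp => [j b|i'|i'|i'| | | | ] /= Hp; try (have Hi' := rk_lt i');
    try (move=> *; exfalso; lia).
  + by move: Hp; have := ltn_ord j; case: (b == a j); lia.
  + rewrite /cond => w; case: w => [j b|j|j|j| | | | ] /=; rewrite /Gadj /= ?rkE ?eqxx //=;
      try (have := rk_lt j); try (have := ltn_ord j); try (case: (b == a j)); try (move=> *; exfalso; lia);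
      (move=> *; exists (VC i); rewrite /Gadj /= ?rkE ?eqxx /=; split; [lia|split; [by []|lia]]).
- by case/andP.
- move=> _ _; apply: W_triv => w; case: w => [j b|j|j|j| | | | ] /=; rewrite /Gadj /= ?ordE //;
      try (have := ltn_ord j); try (have := rk_lt j); try case: (b == a j); lia.
- move=> _ _; apply: W_triv => w; case: w => [j b|j|j|j| | | | ] /=; rewrite /Gadj /= ?ordE //;
      try (have := ltn_ord j); try (have := rk_lt j); try case: (b == a j); lia.
- move=> /andP[_ Hp] _.
  case: v Hp => [j b|i'|i'|i'| | | | ] /= Hp; try (have Hi' := rk_lt i');
    try (move=> *; exfalso; lia).
  + by move: Hp; have := ltn_ord j; case: (b == a j); lia.
  + by move=> w _; case: w => *; rewrite /Gadj //= ?orbT.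
Qed.

Lemma size_P : size P = 2 * k + 3.
Proof. rewrite /P !size_cat !size_map -?enumT size_enum_ord /=; lia. Qed.

Lemma pos0 z : (0 < pos z) = (z != VR).
Proof.
rewrite vtx_eqE; case: z => [j b|j|j|j| | | | ] //=; try lia.
by case: (b == a j); have := ltn_ord j; lia.
Qed.

Lemma label_c i i'' : lbfs_label adj VR s (pos (VC i)) (VC i'') = keyc i''.
Proof.
have Hi := rk_lt i.
rewrite /lbfs_label vtx_eqE /= ?cat0s iotaD filter_cat.
have -> : [seq p <- iota (0 + (2 * k + 3)) (rk i) | adj (nth VR s p) (VC i'')] = [::].
  rewrite (eq_in_filter (a2 := pred0)) ?filter_pred0 // => p.
  rewrite mem_iota => /andP[H1 H2].
  have Hps : p < size s by rewrite size_s; have := rk_lt i; lia.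
  move: (pos_nth Hps); case: (nth VR s p) => [j b|j|j|j| | | | ] /= E;
    rewrite /Gadj //=; try (have := ltn_ord j); try (have := rk_lt j); try (move: E; case: (b == a j)); intros; exfalso; lia.
rewrite cats0 /keyc; congr map; apply: eq_in_filter => p; rewrite mem_iota => /andP[_ Hp].
by rewrite /s nth_cat size_P Hp.
Qed.

Lemma Rc_trans : transitive Rc.
Proof. move=> y x z; rewrite /Rc => H1 H2; exact: lex_le_trans H2 H1. Qed.
Lemma Rc_refl : reflexive Rc.
Proof. by move=> x; rewrite /Rc lex_le_refl. Qed.
Lemma Rc_total : total Rc.
Proof. by move=> x y; rewrite /Rc lex_le_total. Qed.

Lemma Rc_sorted i i' : rk i <= rk i' -> Rc i i'.
Proof.
move=> H.
have := sorted_leq_nth Rc_trans Rc_refl i (sort_sorted Rc_total (enum 'I_l)).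
rewrite -/sig => /(_ (rk i) (rk i')).
rewrite !inE /rk !index_mem !mem_sig !nth_index ?mem_sig //.
by apply.
Qed.

Lemma label_ok x v : pos x <= pos v ->
  lex_le (lbfs_label adj VR s (pos x) v) (lbfs_label adj VR s (pos x) x).
Proof.
move=> Hxv.
case: (posnP (pos x)) => [Ex|Hx0].
  rewrite Ex /lbfs_label /=.
  have -> : x = VR by apply: pos_inj.
  rewrite eqxx; case: (v == VR); [exact: lex_le_refl | by []].
case: (boolP (is_c x && is_c v)) => [|Hc].
  case: x Hxv Hx0 => // i; case: v => // i' Hxv _ _.
  rewrite !label_c; apply: Rc_sorted; move: Hxv => /=; lia.
have Hv0 : (v == VR) = false by apply/negbTE; rewrite -pos0; lia.
have Hx0' : (x == VR) = false by apply/negbTE; rewrite -pos0.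
rewrite /lbfs_label Hv0 Hx0' !cat0s.
apply: lex_filter; first by rewrite add0n; have := pos_lt x; rewrite card_vtx; lia.
move=> i /andP[_ Hi] Hiv Hix.
have Hs : i < size s by rewrite size_s; have := pos_lt x; lia.
have Hcond : cond x v by apply: cond_all; rewrite // Hx0 Hxv.
have := Hcond (nth VR s i); rewrite pos_nth // => /(_ Hi Hiv Hix) [w' [Hw1 [Hw2 Hw3]]].
exists (pos w'); rewrite nth_pos Hw1 Hw2 Hw3 /=; lia.
Qed.

Definition par (x : V) : V :=
  match x with VU => VP | VT i => VC i | _ => VR end.

Lemma par_adj x : x != VR -> adj x (par x).
Proof. case: x => [j b|i|i|i| | | | ]; rewrite /Gadj //= ?eqxx //. Qed.

Lemma par_min x z : adj x z -> pos (par x) <= pos z.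
Proof.
case: x => [j b|i|i|i| | | | ] //=.
- case: z => [j' b'|j'|j'|j'| | | | ]; rewrite /Gadj //= ?rkE; try lia.
- move=> H; rewrite pos0; apply/negP => /eqP E; by rewrite E /Gadj in H.
Qed.

Lemma leftmost_par x y : x != VR -> leftmost_nb adj s x y = (y == par x).
Proof.
move=> Hx; rewrite /leftmost_nb; apply/idP/eqP.
- case/andP=> Hxy /forallP /(_ (par x)); rewrite par_adj // !index_s /= => H.
  by apply: pos_inj; apply/eqP; rewrite eqn_leq H par_min.
- move=> ->; rewrite par_adj //; apply/forallP => z; apply/implyP => Hz.
  by rewrite !index_s par_min.
Qed.

Lemma ftree_eq x y : ftree_edge adj s x y =
  ((x != VR) && (y == par x)) || ((y != VR) && (x == par y)).
Proof.
rewrite /ftree_edge !index_s !pos0.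
case: (eqVneq x VR) => [->|Hx] /=; case: (eqVneq y VR) => [->|Hy] /=;
  rewrite ?leftmost_par //.
Qed.

Lemma Tex (x y : V) :
  [exists i : 'I_l, ((x == VC i) && (y == VT i)) || ((x == VT i) && (y == VC i))] =
  match x, y with VC i, VT i' => i == i' | VT i, VC i' => i == i' | _, _ => false end.
Proof.
apply/existsP/idP.
- case=> i0; rewrite !vtx_eqE.
  case: x => [j b|i|i|i| | | | ]; case: y => [j' b'|i'|i'|i'| | | | ] //=;
    rewrite ?andbF ?orbF //=; by case/andP => /eqP -> /eqP ->.
- case: x => [j b|i|i|i| | | | ]; case: y => [j' b'|i'|i'|i'| | | | ] //= /eqP <-;
    exists i; by rewrite !vtx_eqE /= eqxx ?orbT.
Qed.

Lemma tree_ok x y : Tedge cl x y = ftree_edge adj s x y.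
Proof.
rewrite ftree_eq /Tedge Tex !vtx_eqE.
case: x => [j b|i|i|i| | | | ]; case: y => [j' b'|i'|i'|i'| | | | ]; rewrite /Gadj /= ?orbF ?andbF //= eq_sym.
Qed.

Lemma main_LBFS : is_LBFS adj s.
Proof.
split.
  by apply: uniq_perm; [exact: uniq_s | exact: enum_uniq | move=> x; rewrite mem_s mem_enum].
exists VR => j Hj v Hv.
have Hx := pos_nth Hj.
move: Hv; rewrite in_take ?mem_s // index_s -leqNgt => Hv.
by have := label_ok (x := nth VR s j) (v := v); rewrite Hx; apply.
Qed.

End Main.

Unset Implicit Arguments.

Theorem lemma6 (k l : nat) (cl : 'I_l -> 'I_3 -> lit k) :
  satisfiable cl ->
  exists s : seq (vtx k l),
    is_LBFS (Gadj cl) s /\ is_Ftree (Gadj cl) s (Tedge cl).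
Proof.
case=> a sat; exists (s cl a); split.
- exact: main_LBFS.
- move=> x y; exact: tree_ok.
Qed.
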